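(* Let $M:D\to E$ be the continuous map where $D=\{x,y,z,c\}$ has open sets $\emptyset,\{x,y,z\},D$, $E=\{u,v\}$ is the two-point antidiscrete space, and $M(x)=M(y)=u$, $M(z)=M(c)=v$. Let $k:\{\bullet\}\to S$ be the map sending the point to the closed point $c$ of the Sierpinski space $S=\{o,c\}$ (open sets $\emptyset,\{o\},S$). Then, in $\mathrm{Top}$, $\{M\}^l=\{k\}^{lr}$, and this is the class of closed subspace embeddings, i.e. of closed injective continuous maps.
   Context: For continuous maps $f:A\to B$, $g:C\to D'$, $f\pitchfork g$ means: for all continuous $t:A\to C$, $b:B\to D'$ with $g\circ t=b\circ f$ there is continuous $d:B\to C$ with $d\circ f=t$, $g\circ d=b$. For a class $P$, $P^l=\{f: f\pitchfork g\ \forall g\in P\}$, $P^r=\{g: f\pitchfork g\ \forall f\in P\}$, and $P^{lr}=(P^l)^r$. *)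

(* Defs.v *)
From HB Require Import structures.
From mathcomp Require Import all_boot all_order all_algebra.
From mathcomp Require Import all_classical all_reals topology.
Set Implicit Arguments.
Unset Strict Implicit.
Unset Printing Implicit Defensive.
Local Open Scope classical_set_scope.

Definition chain3_op (T : Type) (U : set T) : set_system T :=
  fun A => A = set0 \/ A = U \/ A = setT.

Lemma chain3_opT (T : Type) (U : set T) : chain3_op U setT.
Proof. by right; right. Qed.

Lemma chain3_opI (T : Type) (U : set T) : setI_closed (chain3_op U).
Proof.
move=> A B [->|[->|->]] [->|[->|->]];
  rewrite ?set0I ?setI0 ?setIid ?setTI ?setIT; rewrite /chain3_op; tauto.
Qed.

Lemma chain3_op_bigU (T : Type) (U : set T) (I : Type) (f : I -> set T) :
  (forall i, chain3_op U (f i)) -> chain3_op U (\bigcup_i f i).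
Proof.
move=> hf.
have [[i fiT]|nT] := pselect (exists i, f i = setT).
  right; right; apply/seteqP; split=> // x _; exists i => //; by rewrite fiT.
have [[i fiU]|nU] := pselect (exists i, f i = U).
  right; left; apply/seteqP; split.
    move=> x [j _ fjx]; have [fj0|[fjU|fjT]] := hf j.
    - by rewrite fj0 in fjx.
    - by rewrite -fjU.
    - by exfalso; apply: nT; exists j.
  by move=> x Ux; exists i => //; rewrite fiU.
left; apply/seteqP; split=> // x [j _ fjx].
have [fj0|[fjU|fjT]] := hf j.
- by rewrite fj0 in fjx.
- by exfalso; apply: nU; exists j.
- by exfalso; apply: nT; exists j.
Qed.

Inductive Dpt := Dx | Dy | Dz | Dc.
HB.instance Definition _ := gen_eqMixin Dpt.
HB.instance Definition _ := gen_choiceMixin Dpt.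
Definition Dxyz : set Dpt := [set p | p = Dx \/ p = Dy \/ p = Dz].
HB.instance Definition _ := isOpenTopological.Build Dpt
  (@chain3_opT _ Dxyz) (@chain3_opI _ Dxyz) (@chain3_op_bigU _ Dxyz).

(* The two-point antidiscrete space E = {u,v}. *)
Inductive Ept := Eu | Ev.
HB.instance Definition _ := gen_eqMixin Ept.
HB.instance Definition _ := gen_choiceMixin Ept.
HB.instance Definition _ := isOpenTopological.Build Ept
  (@chain3_opT _ (@set0 Ept)) (@chain3_opI _ set0) (@chain3_op_bigU _ set0).

Inductive Spt := So | Sc.
HB.instance Definition _ := gen_eqMixin Spt.
HB.instance Definition _ := gen_choiceMixin Spt.
HB.instance Definition _ := isOpenTopological.Build Spt
  (@chain3_opT _ [set So]) (@chain3_opI _ [set So]) (@chain3_op_bigU _ [set So]).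

Inductive Pt := Pbullet.
HB.instance Definition _ := gen_eqMixin Pt.
HB.instance Definition _ := gen_choiceMixin Pt.
HB.instance Definition _ := isOpenTopological.Build Pt
  (@chain3_opT _ (@setT Pt)) (@chain3_opI _ setT) (@chain3_op_bigU _ setT).

Definition M (p : Dpt) : Ept :=
  match p with Dx | Dy => Eu | Dz | Dc => Ev end.

Definition k (p : Pt) : Spt := Sc.

(* Arrows of Top (as bare functions; continuity is imposed by the classes). *)
Record arrow := Arrow { dom : topologicalType; cod : topologicalType;
                        fn : dom -> cod }.
Arguments fn : clear implicits.

Definition lifts (f g : arrow) : Prop :=
  forall (t : dom f -> dom g) (b : cod f -> cod g),
    continuous t -> continuous b -> fn g \o t = b \o fn f ->
    exists d : cod f -> dom g,
      [/\ continuous d, d \o fn f = t & fn g \o d = b].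

Definition lcl (P : arrow -> Prop) : arrow -> Prop :=
  fun f => continuous (fn f) /\ forall g, P g -> lifts f g.
Definition rcl (P : arrow -> Prop) : arrow -> Prop :=
  fun g => continuous (fn g) /\ forall f, P f -> lifts f g.

Definition closed_embedding (X Y : topologicalType) (f : X -> Y) : Prop :=
  [/\ continuous f, injective f & forall A : set X, closed A -> closed (f @` A)].

(* Main.v *)
Require Import Defs.
From HB Require Import structures.
From mathcomp Require Import all_boot all_order all_algebra.
From mathcomp Require Import all_classical all_reals topology.
Set Implicit Arguments.
Unset Strict Implicit.
Unset Printing Implicit Defensive.
Local Open Scope classical_set_scope.

Inductive Two := T1 | T2.
HB.instance Definition _ := gen_eqMixin Two.
HB.instance Definition _ := gen_choiceMixin Two.
Definition two_op : set_system Two := fun _ => True.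
Lemma two_opT : two_op setT. Proof. by []. Qed.
Lemma two_opI : setI_closed two_op. Proof. by []. Qed.
Lemma two_op_bigU (I : Type) (f : I -> set Two) :
  (forall i, two_op (f i)) -> two_op (\bigcup_i f i).
Proof. by []. Qed.
HB.instance Definition _ := isOpenTopological.Build Two
  two_opT two_opI two_op_bigU.

Lemma contD (T : topologicalType) (h : T -> Dpt) :
  open (h @^-1` Dxyz) -> continuous h.
Proof.
move=> hO; apply/continuousP => A [->|[->|->]] //.
- by rewrite preimage_set0; exact: open0.
- by rewrite preimage_setT; exact: openT.
Qed.

Lemma contS (T : topologicalType) (h : T -> Spt) :
  open (h @^-1` [set So]) -> continuous h.
Proof.
move=> hO; apply/continuousP => A [->|[->|->]] //.
- by rewrite preimage_set0; exact: open0.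
- by rewrite preimage_setT; exact: openT.
Qed.

Lemma contE (T : topologicalType) (h : T -> Ept) : continuous h.
Proof.
apply/continuousP => A [->|[->|->]].
- by rewrite preimage_set0; exact: open0.
- by rewrite preimage_set0; exact: open0.
- by rewrite preimage_setT; exact: openT.
Qed.

Lemma contP (T : topologicalType) (h : T -> Pt) : continuous h.
Proof.
apply/continuousP => A [->|[->|->]].
- by rewrite preimage_set0; exact: open0.
- by rewrite preimage_setT; exact: openT.
- by rewrite preimage_setT; exact: openT.
Qed.

Lemma lclk_dense (f : arrow) : lcl (fun g => g = Arrow k) f ->
  forall V : set (cod f), open V -> forall y, V y -> exists a, V (fn f a).
Proof.
move=> [fc fl] V oV y Vy; apply: contrapT => nE.
have [] := fl (Arrow k) erefl (fun _ => Pbullet)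
  (fun y => if pselect (V y) then So else Sc).
- exact: contP.
- apply: contS.
  have -> : (fun y => if pselect (V y) then So else Sc) @^-1` [set So] = V.
    by rewrite predeqE => z /=; case: pselect => // _; split.
  exact: oV.
- apply: funext => a /=; rewrite /k; case: pselect => // Va.
  by exfalso; apply: nE; exists a.
move=> d [_ _ kd].
have := congr1 (fun h => h y) kd; rewrite /= /k; case: pselect => //.
Qed.

Lemma dense_lclk (f : arrow) : continuous (fn f) ->
  (forall V : set (cod f), open V -> forall y, V y -> exists a, V (fn f a)) ->
  lcl (fun g => g = Arrow k) f.
Proof.
move=> fc fd; split => // g -> t b tc bc e.
exists (fun _ => Pbullet); split.
- exact: contP.
- by apply: funext => a /=; case: (t a).
- apply: funext => y /=; rewrite /k; apply: contrapT => neq.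
  have bo : b y = So by move: neq; case: (b y).
  have oV : open (b @^-1` [set So]).
    by apply: (proj1 (continuousP _) bc); right; left.
  have [a /= ha] := fd _ oV y bo.
  by have := congr1 (fun h => h a) e; rewrite /= /k ha.
Qed.

Lemma lclM_iff (f : arrow) :
  lcl (fun g => g = Arrow M) f <-> closed_embedding (fn f).
Proof.
split.
- move=> [fc fl]; split => //.
  + move=> a1 a2 e12; apply: contrapT => ne.
    pose t := fun a => if pselect (a = a1) then Dx else Dy.
    have := fl (Arrow M) erefl t (fun _ : cod f => Eu); case.
    * apply: contD.
      have -> : t @^-1` Dxyz = setT.
        rewrite predeqE => z; rewrite /t /Dxyz /=; case: (pselect (z = a1)) => ?;
        split => // _; tauto.
      exact: openT.
    * exact: contE.
    * by apply: funext => a; rewrite /= /t; case: pselect.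
    move=> d [_ df _].
    have h1 := congr1 (fun h => h a1) df; have h2 := congr1 (fun h => h a2) df.
    simpl in h1, h2; rewrite e12 h2 /t in h1.
    move: h1; case: (pselect (a2 = a1)) => [h|?]; first by exfalso; exact: ne (esym h).
    by case: (pselect (a1 = a1)).
  + move=> C Ccl.
    pose t := fun a => if pselect (C a) then Dc else Dz.
    pose b := fun y => if pselect (exists a, fn f a = y) then Ev else Eu.
    have := fl (Arrow M) erefl t b; case.
    * apply: contD.
      have -> : t @^-1` Dxyz = ~` C.
        rewrite predeqE => z; rewrite /t /Dxyz /=; case: (pselect (C z)) => Cz;
        split => H; try tauto; by case: H => [|[]].
      exact: closed_openC.
    * exact: contE.
    * apply: funext => a; rewrite /= /t /b.
      case: (pselect (exists a0, fn f a0 = fn f a)) => [?|nx]; last by exfalso; apply: nx; exists a.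
      by case: (pselect (C a)).
    move=> d [dc df Md].
    have -> : fn f @` C = ~` (d @^-1` Dxyz).
      rewrite predeqE => y; split.
        move=> [a Ca <-]; have := congr1 (fun h => h a) df; rewrite /= => ->.
        rewrite /t; case: (pselect (C a)) => // ? H; by case: H => [|[]].
      move=> nd.
      have dyc : d y = Dc.
        move: nd; rewrite /Dxyz /=; case: (d y) => //= nd; exfalso; apply: nd; by [left|right;left|right;right].
      have := congr1 (fun h => h y) Md; rewrite /= dyc /b.
      case: (pselect (exists a, fn f a = y)) => // -[a fa] ?.
      have := congr1 (fun h => h a) df; rewrite /= fa dyc /t.
      by case: (pselect (C a)) => // Ca ?; exists a.
    by apply: open_closedC; apply: (proj1 (continuousP _) dc); right; left.
- move=> [fc finj fcl]; split => // g -> t b tc bc e.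
  pose d (y : cod f) : Dpt :=
    match pselect (exists a, fn f a = y) with
    | left H => t (projT1 (cid H))
    | right _ => match b y with Eu => Dx | Ev => Dz end end.
  have hd : forall a, d (fn f a) = t a.
    move=> a; rewrite /d; case: pselect => [H|H]; last by exfalso; apply: H; exists a.
    by case: cid => a' /= /finj ->.
  exists d; split.
  + apply: contD.
    have -> : d @^-1` Dxyz = ~` (fn f @` (t @^-1` [set Dc])).
      rewrite predeqE => y /=; split.
        move=> HD [a /= ta fa]; move: HD; rewrite -fa hd ta /Dxyz /=.
        by case=> [|[]].
      move=> nI; rewrite /d /Dxyz /=.
      case: (pselect (exists a, fn f a = y)) => [H|H].
        case: cid => a /= fa; move: nI; rewrite -fa.
        case E: (t a) => [|||] nI; try by [left|right;left|right;right].
        by exfalso; apply: nI; exists a.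
      by case: (b y); [left|right;right;reflexivity].
    apply: closed_openC; apply: fcl.
    have -> : t @^-1` [set Dc] = ~` (t @^-1` Dxyz).
      rewrite predeqE => z /=; rewrite /Dxyz; case: (t z) => /=;
      split => H; first [ by case: H => [|[]] | discriminate
                        | by move=> [|[]]
                        | by exfalso; apply: H; first [left; reflexivity|right; left; reflexivity|right;right;reflexivity]
                        | done ].
    by apply: open_closedC; apply: (proj1 (continuousP _) tc); right; left.
  + by apply: funext => a; exact: hd.
  + apply: funext => y; rewrite /= /d; case: pselect => [H|H].
      case: cid => a /= <-; exact: (congr1 (fun h => h a) e).
    by case: (b y).
Qed.

Lemma rclk_iff (g : arrow) :
  rcl (lcl (fun g => g = Arrow k)) g <-> closed_embedding (fn g).
Proof.
split.
- move=> [gc gl]; split => //.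
  + move=> x1 x2 e12.
    pose f := @Arrow Two Pt (fun _ => Pbullet).
    have fk : lcl (fun g => g = Arrow k) f.
      apply: dense_lclk; first exact: contP.
      by move=> V _ y Vy; exists T1; case: y Vy.
    pose t := fun w : Two => match w with T1 => x1 | T2 => x2 end.
    have [] := gl f fk t (fun _ : Pt => fn g x1).
    * by apply/continuousP => A _.
    * exact: cst_continuous.
    * by apply: funext => -[] /=.
    move=> d [_ df _].
    have h1 := congr1 (fun h => h T1) df; have h2 := congr1 (fun h => h T2) df.
    by move: h1 h2 => /= <- <-.
  + move=> C Ccl y cly.
    pose bf := fun o : option (dom g) => match o with Some x => fn g x | None => y end.
    pose f := @Arrow (dom g) (initial_topology bf) (fun x => Some x).
    have fk : lcl (fun g => g = Arrow k) f.
      apply: dense_lclk.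
        apply/continuousP => A [V oV <-].
        exact: (proj1 (continuousP _) gc).
      move=> W [V oV <-] [x|] /= Vx; first by exists x.
      have [w [[c Cc <-] Vc]] := cly V (open_nbhs_nbhs (conj oV Vx)).
      by exists c.
    have [] := gl f fk (fun x => x) (bf : initial_topology bf -> _).
    * by apply/continuousP.
    * exact: initial_continuous.
    * by [].
    move=> d [dc df gd].
    have hd : forall x, d (Some x) = x.
      by move=> x; exact: (congr1 (fun h => h x) df).
    have CdN : C (d None).
      apply: contrapT => nC.
      have [V oV eV] := proj1 (continuousP _) dc _ (closed_openC Ccl).
      have VN : (bf @^-1` V) None by rewrite eV.
      have [w [[c Cc <-] Vc]] := cly V (open_nbhs_nbhs (conj oV VN)).
      have : (bf @^-1` V) (Some c) by [].
      by rewrite eV /= hd.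
    exists (d None) => //.
    exact: (congr1 (fun h => h None) gd).
- move=> [gc ginj gcl]; split => // f fk t b tc bc e.
  have dense := lclk_dense fk.
  have ex : forall y, exists x, fn g x = b y.
    move=> y; apply: contrapT => nx.
    have cl : closed (fn g @` setT) := gcl _ closedT.
    have oV : open (b @^-1` (~` (fn g @` setT))).
      exact: (proj1 (continuousP _) bc _ (closed_openC cl)).
    have Vy : (b @^-1` (~` (fn g @` setT))) y.
      by move=> [x _ gx]; apply: nx; exists x.
    have [a Va] := dense _ oV y Vy.
    apply: Va; exists (t a) => //; exact: (congr1 (fun h => h a) e).
  pose d := fun y => projT1 (cid (ex y)).
  have hd : forall y, fn g (d y) = b y := fun y => projT2 (cid (ex y)).
  exists d; split.
  + apply/continuousP => O oO.
    have -> : d @^-1` O = b @^-1` (~` (fn g @` (~` O))).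
      rewrite predeqE => y; split.
        move=> Od [x nOx gx]; apply: nOx.
        by rewrite (ginj _ _ (etrans gx (esym (hd y)))).
      move=> H; apply: contrapT => nO; apply: H; exists (d y) => //.
    apply: (proj1 (continuousP _) bc); apply: closed_openC; apply: gcl.
    exact: open_closedC.
  + apply: funext => a; apply: ginj; rewrite /= hd.
    exact: (esym (congr1 (fun h => h a) e)).
  + by apply: funext => y; exact: hd.
Qed.

Theorem mainTheorem6 :
  (forall f : arrow, lcl (fun g => g = Arrow M) f <-> rcl (lcl (fun g => g = Arrow k)) f) /\
  (forall f : arrow, rcl (lcl (fun g => g = Arrow k)) f <-> closed_embedding (fn f)).
Proof.
split => f; last exact: rclk_iff.
exact: iff_trans (lclM_iff f) (iff_sym (rclk_iff f)).
Qed.
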